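(* Let $\beta_{2k}:=B_{2k}/(2k)!$. For every even integer $N\ge4$ and every integer $i$ with $0\le i\le N/2-1$, $$\sum_{k=0}^{N/2-1-\lfloor i/2\rfloor}\beta_{2k}\beta_{N-2k}\binom{N-2k}{i}+\sum_{l=0}^{\lfloor i/2\rfloor}\beta_{2l}\beta_{N-2l}\binom{N-2l}{i-2l+1}=0.$$
   Context: Bernoulli numbers are defined by $\frac{z}{e^z-1}=\sum_{m\ge0}\frac{B_m}{m!}z^m$; equivalently $\frac x2\coth\frac x2=\sum_{J\ge0}\beta_{2J}x^{2J}$. Convention: $\binom ab=0$ if $b<0$ or $b>a$. *)

(* Defs.v *)
From mathcomp Require Import all_boot all_order all_algebra.
Set Implicit Arguments. Unset Strict Implicit. Unset Printing Implicit Defensive.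
Import Order.TTheory GRing.Theory Num.Theory.
Local Open Scope ring_scope.

(* Coefficients beta_m = B_m / m! of the generating function
   z/(e^z - 1) = sum_m beta_m z^m.  Multiplying by (e^z-1)/z = sum_j z^j/(j+1)!
   and extracting the coefficient of z^m gives
     sum_{k=0}^m beta_k / (m-k+1)! = [m == 0],
   which determines beta_m recursively; bern_gf_list n = [beta_0; ...; beta_n]. *)
Fixpoint bern_gf_list (n : nat) : seq rat :=
  match n with
  | 0 => [:: 1]
  | n'.+1 =>
      let s := bern_gf_list n' in
      rcons s (- \sum_(k < n'.+1) s`_k / ((n'.+1 - k).+1)`!%:R)
  end.

Definition bern_coef (m : nat) : rat := (bern_gf_list m)`_m.

Definition bernoulli (m : nat) : rat := (m`!)%:R * bern_coef m.

Definition beta (m : nat) : rat := bernoulli m / (m`!)%:R.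

(* Main.v *)
Require Import Defs.
From mathcomp Require Import all_boot all_order all_algebra zify ring lra.
Unset Printing Implicit Defensive.
Import Order.TTheory GRing.Theory Num.Theory.
Local Open Scope ring_scope.

Lemma size_bgl n : size (bern_gf_list n) = n.+1.
Proof. by elim: n => //= n IH; rewrite size_rcons IH. Qed.

Lemma nth_bgl n k : (k <= n)%N -> (bern_gf_list n)`_k = bern_coef k.
Proof.
elim: n => [|n IH]; first by rewrite leqn0 => /eqP->.
rewrite leq_eqVlt => /orP[/eqP->//|hk].
by rewrite /= nth_rcons size_bgl hk IH.
Qed.

Lemma bern_rec n : \sum_(j < n.+1) bern_coef j / ((n - j).+1)`!%:R = (n == 0%N)%:R.
Proof.
case: n => [|n]; first by rewrite big_ord1 /bern_coef /= divr1.
rewrite big_ord_recr /= subnn /= divr1.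
rewrite {2}/bern_coef /= nth_rcons size_bgl ltnn eqxx.
apply/eqP; rewrite subr_eq0; apply/eqP; apply: eq_bigr => j _.
by rewrite nth_bgl // -ltnS.
Qed.

Lemma beta_b m : beta m = bern_coef m.
Proof.
by rewrite /beta /bernoulli mulrAC divff ?mul1r // pnatr_eq0 -lt0n fact_gt0.
Qed.


Section Cong.
Context {R : comNzRingType}.
Definition eqM m (p q : {poly R}) := forall k, (k < m)%N -> p`_k = q`_k.

Lemma eqM_refl m p : eqM m p p. Proof. by []. Qed.
Lemma eqM_sym m p q : eqM m p q -> eqM m q p.
Proof. by move=> h k hk; rewrite h. Qed.
Lemma eqM_trans m p q r : eqM m p q -> eqM m q r -> eqM m p r.
Proof. by move=> h1 h2 k hk; rewrite h1 ?h2. Qed.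
Lemma eqM_le m m' p q : (m' <= m)%N -> eqM m p q -> eqM m' p q.
Proof. by move=> hm h k hk; rewrite h // (leq_trans hk hm). Qed.
Lemma eqM_add m p p' q q' : eqM m p p' -> eqM m q q' -> eqM m (p + q) (p' + q').
Proof. by move=> h1 h2 k hk; rewrite !coefD h1 ?h2. Qed.
Lemma eqM_opp m p p' : eqM m p p' -> eqM m (- p) (- p').
Proof. by move=> h1 k hk; rewrite !coefN h1. Qed.
Lemma eqM_sub m p p' q q' : eqM m p p' -> eqM m q q' -> eqM m (p - q) (p' - q').
Proof. by move=> h1 h2; apply: eqM_add => //; apply: eqM_opp. Qed.
Lemma eqM_mul m p p' q q' : eqM m p p' -> eqM m q q' -> eqM m (p * q) (p' * q').
Proof.
move=> h1 h2 k hk; rewrite !coefM; apply: eq_bigr => [[j hj]] _ /=.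
rewrite h1 ?h2 //; lia.
Qed.
Lemma eqM_mull m p q q' : eqM m q q' -> eqM m (p * q) (p * q').
Proof. by move=> h; apply: eqM_mul. Qed.
Lemma eqM_mulr m p p' q : eqM m p p' -> eqM m (p * q) (p' * q).
Proof. by move=> h; apply: eqM_mul. Qed.
Lemma eqM_X m p q : eqM m p q -> eqM m.+1 ('X * p) ('X * q).
Proof. by move=> h [|k] hk; rewrite !coefXM //= h. Qed.
Lemma eqM_Xinv m p q : eqM m.+1 ('X * p) ('X * q) -> eqM m p q.
Proof. by move=> h k hk; have := h k.+1 hk; rewrite !coefXM. Qed.
Lemma eqM_eq m p q : p = q -> eqM m p q.
Proof. by move->. Qed.

Lemma coef_ser_mul L (a b : nat -> R) k : (k < L)%N ->
  (\poly_(n < L) a n * \poly_(n < L) b n)`_k = \sum_(j < k.+1) a j * b (k - j)%N.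
Proof.
move=> hk; rewrite coefM; apply: eq_bigr => [[j hj]] _ /=.
have h1 : (j < L)%N by lia.
have h2 : (k - j < L)%N by lia.
by rewrite !coef_poly h1 h2.
Qed.

Lemma sum_delta n (r : nat) (F : nat -> R) :
  \sum_(i < n) (i == r :> nat)%:R * F i = if (r < n)%N then F r else 0.
Proof.
case: ifP => h.
  rewrite (bigD1 (Ordinal h)) // big1 => [|i /eqP hi].
    by rewrite /= eqxx mul1r addr0.
  case: eqP => [e|]; last by rewrite mul0r.
  by exfalso; apply: hi; apply: val_inj; rewrite /= e.
rewrite big1 // => i _; case: eqP => [e|]; last by rewrite mul0r.
by move: (ltn_ord i); rewrite e h.
Qed.

End Cong.

Arguments eqM_trans {R m p q r}.
Arguments eqM_sym {R m p q}.
Arguments eqM_refl {R} m p.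
Arguments eqM_le {R m m' p q}.
Arguments eqM_add {R m p p' q q'}.
Arguments eqM_opp {R m p p'}.
Arguments eqM_sub {R m p p' q q'}.
Arguments eqM_mul {R m p p' q q'}.
Arguments eqM_mull {R m} p {q q'}.
Arguments eqM_mulr {R m p p'} q.
Arguments eqM_X {R m p q}.
Arguments eqM_Xinv {R m p q}.
Arguments eqM_eq {R m p q}.
Arguments coef_ser_mul {R}.
Arguments sum_delta {R}.


Notation K := {poly rat}.
Definition bs (c : K) L : {poly K} := \poly_(n < L) ((bern_coef n)%:P * c ^+ n).
Definition gs (c : K) L : {poly K} := \poly_(n < L) ((((n.+1)`!)%:R : rat)^-1%:P * c ^+ n).
Definition ps (c : K) L : {poly K} := \poly_(n < L) (((n`!)%:R : rat)^-1%:P * c ^+ n).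

Lemma expr_split (c : K) j k : (j <= k)%N -> c ^+ k = c ^+ j * c ^+ (k - j).
Proof. by move=> h; rewrite -exprD subnKC. Qed.

Lemma FG c L : eqM L (bs c L * gs c L) 1.
Proof.
move=> k hk; rewrite coef_ser_mul // coef1.
transitivity (\sum_(j < k.+1) (bern_coef j / ((k - j).+1)`!%:R)%:P * c^+k).
  apply: eq_bigr => j _; rewrite (expr_split c _ _ (ltnSE (ltn_ord j))) polyCM; ring.
rewrite -big_distrl /= -raddf_sum bern_rec; case: k {hk} => [|k] //=.
  by rewrite mulr1.
by rewrite mul0r.
Qed.

Lemma binq k i : (i <= k)%N ->
  ((k`!)%:R : rat)^-1 * ('C(k, i))%:R = ((i`!)%:R)^-1 * (((k - i)`!)%:R)^-1.
Proof.
move=> h; rewrite -(bin_fact h) !natrM.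
have h1 : ((i`!)%:R : rat) != 0 by rewrite pnatr_eq0 -lt0n fact_gt0.
have h2 : (((k - i)`!)%:R : rat) != 0 by rewrite pnatr_eq0 -lt0n fact_gt0.
have h3 : (('C(k, i))%:R : rat) != 0 by rewrite pnatr_eq0 -lt0n bin_gt0.
field; rewrite h1 h2 h3 //.
Qed.

Lemma PP c d L : eqM L (ps c L * ps d L) (ps (c + d) L).
Proof.
move=> k hk; rewrite coef_ser_mul // coef_poly hk addrC exprDn mulr_sumr.
apply: eq_bigr => j _.
have hj : (j <= k)%N := ltnSE (ltn_ord j).
rewrite -[_ *+ 'C(k, j)]mulr_natl -[('C(k, j))%:R]polyC_natr. rewrite [RHS]mulrA -polyCM binq // polyCM.
ring.
Qed.

Lemma EG c L : eqM L (ps c L - 1) ('X * (c%:P * gs c L)).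
Proof.
move=> k hk; rewrite coefB coef1 coefXM; case: k hk => [|k] hk /=.
  by rewrite coef_poly hk /= expr0 mulr1 fact0 invr1 polyC1 subrr.
rewrite subr0 coefCM !coef_poly hk ltnW // exprS; ring.
Qed.

Lemma PE c L : eqM L (ps c L) ('X * (c%:P * gs c L) + 1).
Proof.
have h := eqM_add (EG c L) (eqM_refl L (1 : {poly K})).
by rewrite subrK in h.
Qed.

Notation t := ('X : {poly rat}).

Lemma stepA L : eqM L ('X * ((1 + t)%:P * gs (1 + t) L))
   ('X * (t%:P * 'X * gs 1 L * gs t L + gs 1 L + t%:P * gs t L)).
Proof.
apply: eqM_trans (eqM_sym (EG (1 + t) L)) _.
apply: eqM_trans (eqM_sub (eqM_sym (PP 1 t L)) (eqM_refl L (1 : {poly K}))) _.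
apply: eqM_trans (eqM_sub (eqM_mul (PE 1 L) (PE t L)) (eqM_refl L (1 : {poly K}))) _.
apply: eqM_eq; rewrite polyC1; ring.
Qed.

Lemma stepB m : let L := m.+1 in
  eqM m ((1 + t)%:P * bs 1 L * bs t L)
        ('X * (t%:P * bs (1 + t) L) + bs t L * bs (1 + t) L + t%:P * bs 1 L * bs (1 + t) L).
Proof.
move=> L.
have FGw c : eqM m (bs c L * gs c L) 1 by apply: eqM_le (FG c L).
set f1 := bs 1 L; set ft := bs t L; set fz := bs (1 + t) L.
set g1 := gs 1 L; set gt := gs t L; set gz := gs (1 + t) L.
have hA := eqM_Xinv (stepA L); rewrite -/g1 -/gt -/gz in hA.
apply: eqM_trans (eqM_eq (esym (mulr1 _))) _.
apply: eqM_trans (eqM_mull ((1 + t)%:P * f1 * ft) (eqM_sym (FGw (1 + t)))) _.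
apply: eqM_trans (_ : eqM m _ (f1 * ft * fz * ((1 + t)%:P * gz))) _.
  by apply: eqM_eq; rewrite /f1 /ft /fz /g1 /gt /gz; ring.
apply: eqM_trans (eqM_mull (f1 * ft * fz) hA) _.
apply: eqM_trans (_ : eqM m _ ('X * (t%:P * fz) * (f1 * g1) * (ft * gt)
     + ft * fz * (f1 * g1) + t%:P * f1 * fz * (ft * gt))) _.
  by apply: eqM_eq; rewrite /f1 /ft /fz /g1 /gt /gz; ring.
apply: eqM_trans (eqM_add (eqM_add (eqM_mul (eqM_mull _ (FGw 1)) (FGw t))
    (eqM_mull _ (FGw 1))) (eqM_mull _ (FGw t))) _.
by apply: eqM_eq; rewrite /f1 /ft /fz /g1 /gt /gz; ring.
Qed.

Lemma coef_1X n r : ((1 + t) ^+ n)`_r = ('C(n, r))%:R.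
Proof.
rewrite exprDn coef_sum.
rewrite (eq_bigr (fun i : 'I_n.+1 => (i == r :> nat)%:R * ('C(n, i))%:R)); last first.
  by move=> i _; rewrite expr1n mul1r coefMn coefXn eq_sym mulr_natr.
rewrite (sum_delta _ _ (fun i => ('C(n, i))%:R)); case: ifP => // h.
by rewrite bin_small // ltnNge -ltnS h.
Qed.

Lemma coefS N q : (q <= N)%N ->
  (\sum_(j < N.+1) (((bern_coef j)%:P * 1 ^+ j) *
      ((bern_coef (N - j)%N)%:P * t ^+ (N - j)%N)))`_q
  = bern_coef (N - q)%N * bern_coef q.
Proof.
move=> hq; rewrite coef_sum.
rewrite (eq_bigr (fun j : 'I_N.+1 => (j == (N - q)%N :> nat)%:R *
          (bern_coef j * bern_coef (N - j)%N))); last first.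
  move=> j _; rewrite expr1n mulr1 mulrA -polyCM coefCM coefXn mulrC.
  have hj := ltn_ord j.
  have -> : (q == (N - j)%N) = (j == (N - q)%N :> nat).
    by apply/eqP/eqP; lia.
  by [].
rewrite (sum_delta _ _ (fun j => bern_coef j * bern_coef (N - j)%N)); have -> : (N - q < N.+1)%N by lia.
by rewrite subKn.
Qed.

Lemma key N i : (0 < N)%N -> (i < N)%N ->
  bern_coef (N - i.+1)%N * bern_coef i.+1 + bern_coef (N - i)%N * bern_coef i
  = bern_coef N.-1 * ('C(N.-1, i))%:R
    + \sum_(j < N.+1) bern_coef j * bern_coef (N - j)%N *
        (if (i.+1 < j)%N then 0 else ('C(N - j, i.+1 - j))%:R)
    + \sum_(j < N.+1) bern_coef j * bern_coef (N - j)%N * ('C(N - j, i))%:R.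
Proof.
move=> hN hi.
have := congr1 (fun p : K => p`_i.+1) (stepB N.+1 N (ltnSn N)).
rewrite /bs /= -!mulrA !coefD (coefCM (1 + t)) coefXM.
have -> : (N == 0%N) = false by case: N hN {hi}.
rewrite !(coefCM t) !coef_ser_mul // coef_poly.
have -> : (N.-1 < N.+2)%N by lia.
rewrite mulrDl mul1r coefD coefXM /= coefS // coefS; last by lia.
rewrite !coefXM /= coefCM coef_1X => ->.
rewrite !coef_sum; congr (_ + _ + _); apply: eq_bigr => j _.
  have -> : (bern_coef j)%:P * t ^+ j * ((bern_coef (N - j)%N)%:P * (1 + t) ^+ (N - j)%N)
     = (bern_coef j * bern_coef (N - j)%N)%:P * (t ^+ j * (1 + t) ^+ (N - j)%N).
    by rewrite polyCM; ring.
  rewrite (coefCM (bern_coef j * bern_coef (N - j)%N)) coefXnM.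
  by case: ifP => _; rewrite ?mulr0 // coef_1X.
have -> : (bern_coef j)%:P * 1 ^+ j * ((bern_coef (N - j)%N)%:P * (1 + t) ^+ (N - j)%N)
     = (bern_coef j * bern_coef (N - j)%N)%:P * ((1 + t) ^+ (N - j)%N).
  by rewrite expr1n polyCM; ring.
by rewrite (coefCM (bern_coef j * bern_coef (N - j)%N)) coef_1X.
Qed.

Lemma ps0 L : eqM L (ps (-1 + 1) L) 1.
Proof.
move=> k hk; rewrite addNr coef_poly hk coef1 expr0n.
by case: k {hk} => [|k] /=; rewrite ?mulr0 // fact0 invr1 polyC1 mulr1.
Qed.

Lemma oddF m : let L := m.+1 in eqM m (bs (-1) L) (bs 1 L + 'X).
Proof.
move=> L.
set f1 := bs 1 L; set fm := bs (-1) L.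
set g1 := gs 1 L; set gm := gs (-1) L; set pm := ps (-1) L.
have h1 : eqM L ('X * ((-1)%:P * gm)) ('X * (- (pm * ((1 : K)%:P * g1)))).
  apply: eqM_trans (eqM_sym (EG (-1) L)) _.
  apply: eqM_trans (eqM_sub (eqM_refl L pm) (eqM_sym (ps0 L))) _.
  apply: eqM_trans (eqM_sub (eqM_refl L pm) (eqM_sym (PP (-1) 1 L))) _.
  apply: eqM_trans (_ : eqM L _ (- (pm * (ps 1 L - 1)))) _.
    by apply: eqM_eq; rewrite /pm /g1 /gm /f1 /fm; ring.
  apply: eqM_trans (eqM_opp (eqM_mull pm (EG 1 L))) _.
  by apply: eqM_eq; rewrite /pm /g1 /gm /f1 /fm; ring.
have h2 : eqM m gm (pm * g1).
  have := eqM_opp (eqM_Xinv h1); rewrite polyCN mulN1r !opprK polyC1 mul1r.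
  by [].
have FGw c : eqM m (bs c L * gs c L) 1 by apply: eqM_le (FG c L).
have h3 : eqM m ((f1 + 'X) * gm) 1.
  apply: eqM_trans (eqM_mull (f1 + 'X) h2) _.
  apply: eqM_trans (_ : eqM m _ (pm * (f1 * g1 + 'X * g1))) _.
    by apply: eqM_eq; rewrite /pm /g1 /gm /f1 /fm; ring.
  apply: eqM_trans (eqM_mull pm (eqM_add (FGw 1) (eqM_refl m ('X * g1)))) _.
  apply: eqM_trans (_ : eqM m _ (pm * ('X * ((1 : K)%:P * g1) + 1))) _.
    by apply: eqM_eq; rewrite /pm /g1 /gm /f1 /fm polyC1; ring.
  apply: eqM_trans (eqM_mull pm (eqM_le (leqnSn m) (eqM_sym (PE 1 L)))) _.
  apply: eqM_trans (eqM_le (leqnSn m) (PP (-1) 1 L)) _.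
  exact: eqM_le (leqnSn m) (ps0 L).
apply: eqM_trans (eqM_eq (esym (mulr1 fm))) _.
apply: eqM_trans (eqM_mull fm (eqM_sym h3)) _.
apply: eqM_trans (_ : eqM m _ ((f1 + 'X) * (fm * gm))) _.
  by apply: eqM_eq; rewrite /pm /g1 /gm /f1 /fm; ring.
apply: eqM_trans (eqM_mull (f1 + 'X) (FGw (-1))) _.
by apply: eqM_eq; rewrite mulr1.
Qed.

Lemma bern_odd k : odd k -> (1 < k)%N -> bern_coef k = 0.
Proof.
move=> ho hk.
have := oddF k.+1 k (ltnSn k).
rewrite coefD coefX /bs !coef_poly ltnS leqnSn.
have -> : (k == 1%N) = false by case: k ho hk => [|[|]].
rewrite addr0 -signr_odd ho expr1 expr1n mulrN1 mulr1 -polyCN => /polyC_inj h.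
have : bern_coef k + bern_coef k = 0 by rewrite -{1}h addNr.
by rewrite -mulr2n -mulr_natr => /eqP; rewrite mulf_eq0 pnatr_eq0 orbF => /eqP.
Qed.


Lemma even_sum n (F : nat -> rat) : (forall k, (k < n)%N -> F k.*2.+1 = 0) ->
  \sum_(0 <= j < (n.*2).+1) F j = \sum_(0 <= k < n.+1) F k.*2.
Proof.
elim: n => [|n IH] hF; first by rewrite !big_nat1.
rewrite doubleS big_nat_recr //= big_nat_recr //= IH; last first.
  by move=> k hk; apply: hF; lia.
rewrite hF // addr0 [RHS]big_nat_recr //=.
Qed.

Lemma odd_m1 n : (0 < n)%N -> odd (n.*2 - 1).
Proof. by case: n => // n _; rewrite doubleS subn1 /= odd_double. Qed.

Lemma bb_odd n k : (1 < n)%N -> (k < n)%N ->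
  bern_coef k.*2.+1 * bern_coef (n.*2 - k.*2.+1) = 0.
Proof.
move=> hn hk; case: k hk => [|k] hk.
  by rewrite (bern_odd (n.*2 - 1)) ?mulr0 ?odd_m1 //; lia.
by rewrite bern_odd ?mul0r //= ?odd_double //; lia.
Qed.

Lemma main_aux n h i : (1 < n)%N -> (h < n)%N -> (i = h.*2 \/ i = h.*2.+1) ->
  \sum_(0 <= k < n - h) bern_coef k.*2 * bern_coef (n.*2 - k.*2) * ('C(n.*2 - k.*2, i))%:R
  + \sum_(0 <= l < h.+1) bern_coef l.*2 * bern_coef (n.*2 - l.*2) * ('C(n.*2 - l.*2, i.+1 - l.*2))%:R = 0.
Proof.
move=> hn hh hi.
have K := key (n.*2) i ltac:(lia) ltac:(lia).
rewrite (bern_odd (n.*2).-1) ?mul0r ?add0r in K; last first.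
- lia.
- by rewrite -subn1 odd_m1 //; lia.
pose G1 j := bern_coef j * bern_coef (n.*2 - j)%N * ('C(n.*2 - j, i))%:R.
pose G2 j := bern_coef j * bern_coef (n.*2 - j)%N *
        (if (i.+1 < j)%N then 0 else ('C(n.*2 - j, i.+1 - j))%:R).
have e1 : \sum_(j < (n.*2).+1) bern_coef j * bern_coef (n.*2 - j)%N * ('C(n.*2 - j, i))%:R
   = \sum_(0 <= k < n.+1) G1 k.*2.
  rewrite -(big_mkord xpredT G1) even_sum // => k hk.
  by rewrite /G1 bb_odd // mul0r.
have e2 : \sum_(j < (n.*2).+1) bern_coef j * bern_coef (n.*2 - j)%N *
        (if (i.+1 < j)%N then 0 else ('C(n.*2 - j, i.+1 - j))%:R)
   = \sum_(0 <= k < n.+1) G2 k.*2.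
  rewrite -(big_mkord xpredT G2) even_sum // => k hk.
  by rewrite /G2 bb_odd // mul0r.
rewrite e1 e2 in K.
have s1 : \sum_(0 <= k < n.+1) G1 k.*2 =
  \sum_(0 <= k < n - h)
     bern_coef k.*2 * bern_coef (n.*2 - k.*2) * ('C(n.*2 - k.*2, i))%:R
  + G1 (n - h)%N.*2.
  rewrite [LHS](@big_cat_nat _ _ _ (n - h)) //=; last lia.
  rewrite [X in _ + X](big_ltn); last lia.
  rewrite [X in _ + (_ + X)]big_nat_cond [X in _ + (_ + X)]big1 ?addr0; first reflexivity.
  move=> k /andP[/andP[k1 k2] _]; rewrite /G1 bin_small ?mulr0 //; lia.
have s2 : \sum_(0 <= k < n.+1) G2 k.*2 =
  \sum_(0 <= l < h.+1)
     bern_coef l.*2 * bern_coef (n.*2 - l.*2) * ('C(n.*2 - l.*2, i.+1 - l.*2))%:R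
  + G2 h.+1.*2.
  rewrite [LHS](@big_cat_nat _ _ _ h.+1) //=; last lia.
  rewrite [X in _ + X](big_ltn); last lia.
  rewrite [X in _ + (_ + X)]big_nat_cond [X in _ + (_ + X)]big1 ?addr0; last first.
    move=> k /andP[/andP[k1 k2] _]; rewrite /G2.
    have -> : (i.+1 < k.*2)%N by lia.
    by rewrite mulr0.
  congr (_ + _); rewrite big_nat_cond [RHS]big_nat_cond; apply: eq_bigr.
  move=> k /andP[/andP[k1 k2] _]; rewrite /G2.
  have -> : (i.+1 < k.*2)%N = false by lia.
  by [].
rewrite s1 s2 in K.
case: hi => hi'; subst i.
- have g1 : G1 (n - h)%N.*2 = bern_coef (n.*2 - h.*2) * bern_coef h.*2.
    rewrite /G1; have -> : ((n - h).*2 = n.*2 - h.*2)%N by lia.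
    have -> : (n.*2 - (n.*2 - h.*2) = h.*2)%N by lia.
    by rewrite binn mulr1.
  have g2 : G2 h.+1.*2 = 0.
    rewrite /G2; have -> : (h.*2.+1 < h.+1.*2)%N by lia.
    by rewrite mulr0.
  have z : bern_coef (n.*2 - h.*2.+1) * bern_coef h.*2.+1 = 0 by rewrite mulrC bb_odd.
  rewrite g1 g2 z in K; lra.
- have g1 : G1 (n - h)%N.*2 = 0.
    by rewrite /G1 bin_small ?mulr0 //; lia.
  have g2 : G2 h.+1.*2 = bern_coef (n.*2 - h.*2.+2) * bern_coef h.*2.+2.
    rewrite /G2; have -> : (h.*2.+2 < h.+1.*2)%N = false by lia.
    by rewrite subnn bin0 mulr1 mulrC.
  have z : bern_coef (n.*2 - h.*2.+1) * bern_coef h.*2.+1 = 0 by rewrite mulrC bb_odd.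
  rewrite g1 g2 z in K; lra.
Qed.

Theorem mainTheorem8 (N i : nat) :
  ~~ odd N -> (4 <= N)%N -> (i <= N./2 - 1)%N ->
  \sum_(0 <= k < (N./2 - 1 - i./2).+1)
      beta k.*2 * beta (N - k.*2) * ('C(N - k.*2, i))%:R
  + \sum_(0 <= l < (i./2).+1)
      beta l.*2 * beta (N - l.*2) * ('C(N - l.*2, i.+1 - l.*2))%:R
  = 0 :> rat.
Proof.
move=> hev h4 hi.
have [n hN] : exists n, N = n.*2.
  by exists N./2; rewrite -{1}(odd_double_half N) (negbTE hev).
subst N; rewrite doubleK in hi *.
have [h hh] : exists h, i = h.*2 \/ i = h.*2.+1.
  have := odd_double_half i; case: (odd i) => /= e; exists i./2.
    by right; rewrite -{1}e add1n.
  by left; rewrite -{1}e.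
have -> : i./2 = h by case: hh => ->; rewrite /= ?uphalf_double ?doubleK.
have hn : (1 < n)%N by lia.
have hhn : (h < n)%N by lia.
have -> : (n - 1 - h).+1 = (n - h)%N by lia.
under eq_bigr => k _ do rewrite !beta_b.
under [X in _ + X]eq_bigr => k _ do rewrite !beta_b.
exact: main_aux.
Qed.
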